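(* Let $\epsilon>0$ and suppose $g\in\mathrm{SO}^0(2,1)$ is $\epsilon$-hyperbolic. Then for all $\delta>0$, $$B\!\left(0,\frac{\delta\epsilon}{4}\right)\cap E^{wu}(g)\subset g\,B(0,\delta).$$
   Context: $\mathbb{R}^{2,1}$ is $\mathbb{R}^3$ with $\mathbb{B}(u,v)=u_1v_1+u_2v_2-u_3v_3$; $\mathrm{SO}^0(2,1)$ is the identity component of its linear isometry group. $\rho$ is Euclidean distance and $B(x,\delta)$ the open Euclidean ball. Let $S^1=\{(\cos\phi,\sin\phi,1)\}$. An element $g\in\mathrm{SO}^0(2,1)$ is hyperbolic if it has real distinct eigenvalues; these are $\lambda<1<\lambda^{-1}$. Let $x^-(g)$ (resp. $x^+(g)$) be the eigenvector for $\lambda$ (resp. $\lambda^{-1}$) lying on $S^1$, and $x^0(g)$ the eigenvector for eigenvalue $1$ with $\mathbb{B}(x^0(g),x^0(g))=1$ such that $(x^-(g),x^+(g),x^0(g))$ is a positively oriented basis. For a unit-spacelike $v$, $x^\pm(v)$ are the two points of $S^1\cap v^\perp$ labelled so that $(x^-(v),x^+(v),v)$ is positively oriented (so $x^\pm(x^0(g))=x^\pm(g)$). $v$ is $\epsilon$-spacelike if $\rho(x^+(v),x^-(v))\ge\epsilon$; hyperbolic $g$ is $\epsilon$-hyperbolic if $x^0(g)$ is $\epsilon$-spacelike. $E^{wu}(g)$ is the linear plane spanned by $x^0(g)$ and $x^+(g)$. *)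

(* Defs.v *)
From HB Require Import structures.
From mathcomp Require Import all_boot all_order all_algebra.
From mathcomp Require Import all_classical all_reals all_analysis.
Set Implicit Arguments. Unset Strict Implicit. Unset Printing Implicit Defensive.
Import Order.TTheory GRing.Theory Num.Theory.
Import numFieldNormedType.Exports.
Local Open Scope classical_set_scope.
Local Open Scope ring_scope.

Section Defs.
Variable R : realType.

Definition vec3 (a b c : R) : 'cV[R]_3 :=
  \col_(i < 3) [:: a; b; c]`_i.

Definition c1 (u : 'cV[R]_3) : R := u ord0 ord0.
Definition c2 (u : 'cV[R]_3) : R := u (inord 1) ord0.
Definition c3 (u : 'cV[R]_3) : R := u (inord 2) ord0.

Definition Bf (u v : 'cV[R]_3) : R := c1 u * c1 v + c2 u * c2 v - c3 u * c3 v.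

Definition O21 : set 'M[R]_3 :=
  [set g | forall u v : 'cV[R]_3, Bf (g *m u) (g *m v) = Bf u v].

Definition SO0_21 : set 'M[R]_3 := connected_component O21 1%:M.

Definition rho (x y : 'cV[R]_3) : R :=
  Num.sqrt (\sum_(i < 3) (x i ord0 - y i ord0) ^+ 2).

Definition Ball (x : 'cV[R]_3) (d : R) : set 'cV[R]_3 := [set y | rho x y < d].

Definition S1 : set 'cV[R]_3 := [set v | exists phi : R, v = vec3 (cos phi) (sin phi) 1].

Definition pos_oriented (a b c : 'cV[R]_3) : Prop := 0 < \det (row_mx a (row_mx b c)).

Definition hyperbolic (g : 'M[R]_3) : Prop :=
  exists a b c : R, [/\ a != b, b != c & a != c] /\
    [/\ eigenvalue g a, eigenvalue g b & eigenvalue g c].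

Definition hyp_data (g : 'M[R]_3) (lam : R) (xm xp x0 : 'cV[R]_3) : Prop :=
  [/\ lam < 1 < lam^-1,
      xm \in S1 /\ g *m xm = lam *: xm,
      xp \in S1 /\ g *m xp = lam^-1 *: xp,
      g *m x0 = x0 /\ Bf x0 x0 = 1
    & pos_oriented xm xp x0].

Definition xpm_of (v xm xp : 'cV[R]_3) : Prop :=
  [/\ xm \in S1, xp \in S1, Bf xm v = 0, Bf xp v = 0 & pos_oriented xm xp v].

Definition eps_spacelike (eps : R) (v : 'cV[R]_3) : Prop :=
  Bf v v = 1 /\ forall xm xp, xpm_of v xm xp -> eps <= rho xp xm.

(* E^{wu}(g) = linear span of x^0(g) and x^+(g) *)
Definition span2 (a b : 'cV[R]_3) : set 'cV[R]_3 :=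
  [set w | exists s t : R, w = s *: a + t *: b].

End Defs.

(* Main.v *)
Require Import Defs.
From HB Require Import structures.
From mathcomp Require Import all_boot all_order all_algebra.
From mathcomp Require Import all_classical all_reals all_analysis.
From mathcomp Require Import ring lra.
Import Order.TTheory GRing.Theory Num.Theory.
Local Open Scope ring_scope.
Local Open Scope classical_set_scope.

Lemma key (R : realFieldType) (a b c p1 p2 q1 q2 s t lam eps delta : R) :
  p1 ^+ 2 + p2 ^+ 2 = 1 -> q1 ^+ 2 + q2 ^+ 2 = 1 ->
  a * p1 + b * p2 - c = 0 -> a * q1 + b * q2 - c = 0 ->
  a ^+ 2 + b ^+ 2 - c ^+ 2 = 1 ->
  eps ^+ 2 <= (p1 - q1) ^+ 2 + (p2 - q2) ^+ 2 -> 0 < eps -> 0 < lam -> lam < 1 -> 0 < delta ->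
  (s * a + t * p1) ^+ 2 + (s * b + t * p2) ^+ 2 + (s * c + t) ^+ 2 < (delta * eps / 4) ^+ 2 ->
  (s * a + t * lam * p1) ^+ 2 + (s * b + t * lam * p2) ^+ 2 + (s * c + t * lam) ^+ 2 < delta ^+ 2.
Proof.
move=> H1 H2 H3 H4 H5 H6 He Hl1 Hl2 Hd HU.
set D := (p1 - q1) ^+ 2 + (p2 - q2) ^+ 2.
have HD4 : D <= 4.
  have H0 : 0 <= (p1 + q1) ^+ 2 + (p2 + q2) ^+ 2 by rewrite addr_ge0 // sqr_ge0.
  have -> : D = 4 - ((p1 + q1) ^+ 2 + (p2 + q2) ^+ 2) + 2 * (p1 ^+ 2 + p2 ^+ 2 - 1) + 2 * (q1 ^+ 2 + q2 ^+ 2 - 1) by rewrite /D; ring.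
  rewrite H1 H2 subrr !mulr0 !addr0; lra.
have He2 : 0 < eps ^+ 2 by rewrite exprn_gt0.
have HDp : 0 < D := lt_le_trans He2 H6.
set X := a * (p2 - q2) - b * (p1 - q1).
set Y := p2 * q1 - p1 * q2.
have HD1 : a * (p1 - q1) + b * (p2 - q2) = 0 by lra.
have HX : (a ^+ 2 + b ^+ 2) * D = X ^+ 2.
  have -> : (a ^+ 2 + b ^+ 2) * D = (a * (p1 - q1) + b * (p2 - q2)) ^+ 2 + X ^+ 2 by rewrite /D /X; ring.
  by rewrite HD1; ring.
have Hc : c = a * p1 + b * p2 by lra.
have HcD : c * D = X * Y.
  rewrite Hc.
  have -> : (a * p1 + b * p2) * D = X * Y + (a * (p1 - q1) + b * (p2 - q2)) * (p1 * (p1 - q1) + p2 * (p2 - q2)) by rewrite /D /X /Y; ring.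
  by rewrite HD1 mul0r addr0.
set P := p1 * q1 + p2 * q2.
have HY : Y ^+ 2 = (p1 ^+ 2 + p2 ^+ 2) * (q1 ^+ 2 + q2 ^+ 2) - P ^+ 2 by rewrite /Y /P; ring.
have HDP : D = (p1 ^+ 2 + p2 ^+ 2) + (q1 ^+ 2 + q2 ^+ 2) - 2 * P by rewrite /D /P; ring.
rewrite H1 H2 in HY HDP.
have HY2 : Y ^+ 2 = D - D ^+ 2 / 4.
  have HP : P = 1 - D / 2 by rewrite HDP; field; by [].
  by rewrite HY HP; field; by [].
have Hab : a ^+ 2 + b ^+ 2 = 1 + c ^+ 2 by lra.
have Hc2 : c ^+ 2 * D ^+ 2 = (1 + c ^+ 2) * D ^+ 2 * (1 - D / 4).
  have -> : c ^+ 2 * D ^+ 2 = (c * D) ^+ 2 by ring.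
  rewrite HcD exprMn -HX HY2 Hab; field; by [].
have HD2 : D ^+ 2 != 0 by rewrite expf_neq0 // gt_eqF.
have Hc2' : c ^+ 2 = (1 + c ^+ 2) * (1 - D / 4).
  apply: (mulIf HD2); rewrite [LHS]Hc2; ring.
have HcD4 : c ^+ 2 * D = 4 - D.
  have -> : c ^+ 2 * D = 4 * (c ^+ 2 - (1 + c ^+ 2) * (1 - D / 4)) + 4 - D by field; by [].
  by rewrite -Hc2' subrr mulr0 add0r.
set N0 := a ^+ 2 + b ^+ 2 + c ^+ 2.
have HN0 : N0 * D <= 8.
  have -> : N0 * D = (a ^+ 2 + b ^+ 2 - c ^+ 2) * D + 2 * (c ^+ 2 * D) by rewrite /N0; ring.
  rewrite H5 HcD4; lra.
have HN0p : 0 <= N0 by rewrite /N0 !addr_ge0 // sqr_ge0.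
have HN0e : N0 * eps ^+ 2 <= 8.
  apply: le_trans HN0; exact: ler_wpM2l.
set NU := (s * a + t * p1) ^+ 2 + (s * b + t * p2) ^+ 2 + (s * c + t) ^+ 2.
have Hs2 : s ^+ 2 <= NU.
  have -> : s ^+ 2 = (s * a + t * p1) ^+ 2 + (s * b + t * p2) ^+ 2 - (s * c + t) ^+ 2.
    have -> : (s * a + t * p1) ^+ 2 + (s * b + t * p2) ^+ 2 - (s * c + t) ^+ 2 =
      s ^+ 2 * (a ^+ 2 + b ^+ 2 - c ^+ 2) + 2 * s * t * (a * p1 + b * p2 - c) + t ^+ 2 * (p1 ^+ 2 + p2 ^+ 2 - 1) by ring.
    rewrite H5 H3 H1 subrr; ring.
  have := sqr_ge0 (s * c + t); rewrite /NU; lra.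
have Hconv : (s * a + t * lam * p1) ^+ 2 + (s * b + t * lam * p2) ^+ 2 + (s * c + t * lam) ^+ 2
   = lam * NU + (1 - lam) * (s ^+ 2 * N0) - lam * (1 - lam) * ((t * p1) ^+ 2 + (t * p2) ^+ 2 + t ^+ 2).
  rewrite /NU /N0; ring.
have HT : 0 <= lam * (1 - lam) * ((t * p1) ^+ 2 + (t * p2) ^+ 2 + t ^+ 2).
  apply: mulr_ge0; first by apply: mulr_ge0; lra.
  by rewrite !addr_ge0 // sqr_ge0.
have HNU : NU < delta ^+ 2 / 4.
  suff : (delta * eps / 4) ^+ 2 <= delta ^+ 2 / 4 by move: HU; rewrite /NU; lra.
  have -> : (delta * eps / 4) ^+ 2 = delta ^+ 2 * eps ^+ 2 / 16 by field; by [].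
  have Hd2 : 0 < delta ^+ 2 by rewrite exprn_gt0.
  have := le_trans H6 HD4.
  nra.
have HsN : s ^+ 2 * N0 < delta ^+ 2 / 2.
  have H8 : s ^+ 2 * N0 * eps ^+ 2 <= 8 * NU.
    have -> : s ^+ 2 * N0 * eps ^+ 2 = s ^+ 2 * (N0 * eps ^+ 2) by ring.
    have := sqr_ge0 s; nra.
  have H9 : 8 * NU < delta ^+ 2 / 2 * eps ^+ 2.
    have -> : delta ^+ 2 / 2 * eps ^+ 2 = 8 * ((delta * eps / 4) ^+ 2) by field; by [].
    by rewrite ltr_pM2l.
  rewrite -(ltr_pM2r He2); lra.
rewrite Hconv.
nra.
Qed.

Section Aux.
Variable R : realType.
Implicit Types (x y : 'cV[R]_3) (k : R).

Lemma c1D x y : c1 (x + y) = c1 x + c1 y. Proof. by rewrite /c1 !mxE. Qed.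
Lemma c2D x y : c2 (x + y) = c2 x + c2 y. Proof. by rewrite /c2 !mxE. Qed.
Lemma c3D x y : c3 (x + y) = c3 x + c3 y. Proof. by rewrite /c3 !mxE. Qed.
Lemma c1Z k x : c1 (k *: x) = k * c1 x. Proof. by rewrite /c1 !mxE. Qed.
Lemma c2Z k x : c2 (k *: x) = k * c2 x. Proof. by rewrite /c2 !mxE. Qed.
Lemma c3Z k x : c3 (k *: x) = k * c3 x. Proof. by rewrite /c3 !mxE. Qed.

Lemma BfZl k x y : Bf (k *: x) y = k * Bf x y.
Proof. rewrite /Bf !c1Z !c2Z !c3Z; ring. Qed.

Lemma rho0 x : rho 0 x = Num.sqrt (c1 x ^+ 2 + c2 x ^+ 2 + c3 x ^+ 2).
Proof.
rewrite /rho !big_ord_recl big_ord0 !mxE !sub0r !sqrrN addr0 addrA.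
have -> : (lift ord0 ord0 : 'I_3) = inord 1 by apply/val_inj; rewrite /= inordK.
have -> : (lift ord0 (lift ord0 ord0) : 'I_3) = inord 2 by apply/val_inj; rewrite /= inordK.
by [].
Qed.

Lemma rhoxy x y : rho x y = Num.sqrt ((c1 x - c1 y) ^+ 2 + (c2 x - c2 y) ^+ 2 + (c3 x - c3 y) ^+ 2).
Proof.
rewrite /rho !big_ord_recl big_ord0 addr0 addrA.
have -> : (lift ord0 ord0 : 'I_3) = inord 1 by apply/val_inj; rewrite /= inordK.
have -> : (lift ord0 (lift ord0 ord0) : 'I_3) = inord 2 by apply/val_inj; rewrite /= inordK.
by [].
Qed.

Lemma S1coord x : x \in @S1 R -> exists p1 p2 : R,
  [/\ c1 x = p1, c2 x = p2, c3 x = 1 & p1 ^+ 2 + p2 ^+ 2 = 1].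
Proof.
rewrite in_setE => -[phi ->]; exists (cos phi), (sin phi).
rewrite /c1 /c2 /c3 /vec3 !mxE !inordK //; split => //; exact: cos2Dsin2.
Qed.

End Aux.

Theorem mainTheorem3 (R : realType) (eps : R) (g : 'M[R]_3)
  (lam : R) (xm xp x0 : 'cV[R]_3) :
  0 < eps ->
  @SO0_21 R g ->
  hyperbolic g ->
  hyp_data g lam xm xp x0 ->
  eps_spacelike eps x0 ->
  forall delta : R, 0 < delta ->
    Ball 0 (delta * eps / 4) `&` span2 x0 xp `<=` (fun u => g *m u) @` Ball 0 delta.
Proof.
move=> He HSO _ [/andP[Hl1 Hl2] [Hxm Hgxm] [Hxp Hgxp] [Hg0 HB0] Hpos] [_ Hsp] delta Hd.
have HO : O21 g := connected_component_sub HSO.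
have Hlpos : 0 < lam.
  case: (ltrgt0P lam) => // [Hn|H0]; last by move: Hl2; rewrite H0 invr0 ltr10.
  have : lam^-1 < 0 by rewrite invr_lt0.
  by move: Hl2; lra.
have Hlinv1 : lam^-1 != 1 by rewrite gt_eqF.
have Bp0 : Bf xp x0 = 0.
  have := HO xp x0; rewrite Hgxp Hg0 BfZl => /eqP.
  rewrite -subr_eq0 -{2}(mul1r (Bf xp x0)) -mulrBl mulf_eq0 subr_eq0 (negbTE Hlinv1) /=.
  by move/eqP.
have Bm0 : Bf xm x0 = 0.
  have Hl1' : lam != 1 by rewrite lt_eqF.
  have := HO xm x0; rewrite Hgxm Hg0 BfZl => /eqP.
  rewrite -subr_eq0 -{2}(mul1r (Bf xm x0)) -mulrBl mulf_eq0 subr_eq0 (negbTE Hl1') /=.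
  by move/eqP.
have Heps := Hsp xm xp (And5 Hxm Hxp Bm0 Bp0 Hpos).
have [p1 [p2 [Hp1 Hp2 Hp3 Hp]]] := @S1coord R xp Hxp.
have [q1 [q2 [Hq1 Hq2 Hq3 Hq]]] := @S1coord R xm Hxm.
move=> u [Hu [s [t Hust]]].
exists (s *: x0 + (t * lam) *: xp); last first.
  rewrite Hust mulmxDr -!scalemxAr Hg0 Hgxp scalerA -mulrA mulfV ?gt_eqF // mulr1.
  by [].
rewrite /Ball /= rho0 c1D c2D c3D !c1Z !c2Z !c3Z Hp1 Hp2 Hp3.
rewrite -(ger0_norm (ltW Hd)) -sqrtr_sqr ltr_sqrt ?exprn_gt0 //.
move: Hu; rewrite /Ball /= rho0 Hust c1D c2D c3D !c1Z !c2Z !c3Z Hp1 Hp2 Hp3.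
have Hde : 0 < delta * eps / 4 by rewrite divr_gt0 ?mulr_gt0.
rewrite -(ger0_norm (ltW Hde)) -sqrtr_sqr ltr_sqrt ?exprn_gt0 // => HU.
move: Heps; rewrite rhoxy Hp1 Hp2 Hp3 Hq1 Hq2 Hq3 subrr expr0n /= addr0.
rewrite -(ger0_norm (ltW He)) -sqrtr_sqr ler_sqrt ?addr_ge0 ?sqr_ge0 // => H6.
move: Bp0 HB0; rewrite /Bf Hp1 Hp2 Hp3 => H3 H5.
have H3' : c1 x0 * p1 + c2 x0 * p2 - c3 x0 = 0 by rewrite -H3; ring.
have H4 : c1 x0 * q1 + c2 x0 * q2 - c3 x0 = 0.
  move: Bm0; rewrite /Bf Hq1 Hq2 Hq3 => <-; ring.
have H5' : c1 x0 ^+ 2 + c2 x0 ^+ 2 - c3 x0 ^+ 2 = 1 by rewrite -H5; ring.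
have K := @key _ (c1 x0) (c2 x0) (c3 x0) p1 p2 q1 q2 s t lam eps delta Hp Hq H3' H4 H5' H6 He Hlpos Hl1 Hd.
move: HU; rewrite !mulr1 => /K.
by [].
Qed.
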